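(* Let $n,m\geq 1$. Define a map $\Phi$ from $\mathscr H_m(n)$ to the set of $(2m+1)$-historic trees on $n$ vertices recursively: $\Phi(T_1)$ is the one-vertex historic tree (vertex labelled $1$); if $\Phi(T_1,\dots,T_k)=H_k$ has been constructed and $T_{k+1}$ arises from $T_k$ by inserting a key into the $i$-th leaf of $T_k$ (counted from left to right, before any splits are performed), then $\Phi(T_1,\dots,T_{k+1})=H_{k+1}$ is obtained from $H_k$ by placing a new vertex labelled $k+1$ at the $i$-th external vertex of $H_k$ (counted from left to right). Then $\Phi$ is well defined (in particular, for every $k$ the number of external vertices of $H_k$ equals the number of leaves of $T_k$), and $\Phi$ is a bijection between $\mathscr H_m(n)$ and the set of all $(2m+1)$-historic trees on $n$ vertices.
   Context: Fix an integer $m\geq 1$. A $B$-tree of order $2m+1$ is a rooted plane tree whose nodes contain pairwise distinct real keys such that: keys are stored in increasing order from left to right; a non-leaf node with $k$ keys has exactly $k+1$ children, the $i$-th child being attached between the $(i-1)$-th and $i$-th key of the node (the first child to the left of the first key, the last to the right of the last key), with all keys in the subtree of that child lying between those two keys; every node contains between $m$ and $2m$ keys, except the root, which contains between $1$ and $2m$ keys; and all leaves have the same distance to the root. Insertion algorithm: a new key is placed in the appropriate leaf at the appropriate position; if that leaf now has $2m+1$ keys, it is split: its median key moves up into the parent node (at the appropriate position), and the $m$ smallest and the $m$ largest keys form two new nodes, which become the children of the parent on either side of the moved key; this is repeated at the parent if it now contains $2m+1$ keys; if the root gets $2m+1$ keys, a new root containing only its median key is created above it, with the two halves as its children. $B$-trees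 are considered up to isomorphism of rooted plane trees (only the shape and the number of keys in each node matter); leaves are numbered from left to right. A history of a $B$-tree $T_n$ with $n$ keys is a sequence $(T_1,\dots,T_n)$ of $B$-trees of order $2m+1$ such that $T_1$ is the single node containing one key and $T_i$ is obtained from $T_{i-1}$ by inserting one key with the insertion algorithm ($i=2,\dots,n$). $\mathscr H_m(n)$ denotes the set of all histories of all $B$-trees of order $2m+1$ with $n$ keys. A $(2m+1)$-historic tree on $n$ vertices is a rooted plane tree whose $n$ vertices are labelled bijectively by $\{1,\dots,n\}$ so that labels increase along every path from the root to a leaf, and such that (with the root at height $0$) the vertices at heights $2m,3m+1,4m+2,\dots$ (i.e. heights $2m+j(m+1)$, $j\geq 0$), called branchings, have two ordered child slots (left and right), each of which may or may not be occupied by a child, while every other vertex has a single child slot (so at most one child). The vertices of the tree are called internal; the unoccupied child slots are called external vertices, ordered from left to right by the planar structure. *)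

(* Defs.v *)
From mathcomp Require Import all_boot.
Set Implicit Arguments. Unset Strict Implicit. Unset Printing Implicit Defensive.

(* B-trees of order 2m+1, up to isomorphism of rooted plane trees:    *)
(* a node records only its number of keys and its ordered children.   *)
Inductive btree : Type := BNode of nat & seq btree.

Definition bkeys (t : btree) := let: BNode k _ := t in k.
Definition bchildren (t : btree) := let: BNode _ cs := t in cs.

Fixpoint nleaves (t : btree) : nat :=
  let: BNode _ cs := t in
  if cs is [::] then 1 else sumn (map nleaves cs).

(* validity: [bt_ok m t isroot d] : t is a B-tree of order 2m+1 all of
   whose leaves are at depth d (the root being at depth 0). *)
Fixpoint bt_ok (m : nat) (t : btree) (isroot : bool) (d : nat) : bool :=
  let: BNode k cs := t in
  [&& (if isroot then 1 <= k else m <= k), k <= 2 * m &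
      if cs is [::] then d == 0
      else [&& 0 < d, size cs == k.+1 & all (fun c => bt_ok m c false d.-1) cs]].

Definition is_btree (m : nat) (t : btree) : Prop := exists d, bt_ok m t true d.

(* The result [inr (l, r)] means: the median key moves up to the parent and
   l (m smallest keys) and r (m largest keys) replace the node. *)
Definition fixnode (m k' : nat) (cs' : seq btree) : btree + (btree * btree) :=
  if k' == (2 * m).+1 then inr (BNode m (take m.+1 cs'), BNode m (drop m.+1 cs'))
  else inl (BNode k' cs').

(* Insertion of a key into the i-th leaf (0-based, left to right) of t. *)
Fixpoint ins (m : nat) (t : btree) (i : nat) {struct t} : btree + (btree * btree) :=
  let: BNode k cs := t in
  if cs is [::] then fixnode m k.+1 [::]
  else
    let fix go (cs : seq btree) (i : nat) : seq btree * bool :=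
      match cs with
      | [::] => ([::], false)
      | c :: cs0 =>
          if i < nleaves c then
            match ins m c i with
            | inl c' => (c' :: cs0, false)
            | inr (l, r) => (l :: r :: cs0, true)
            end
          else let: (cs1, b) := go cs0 (i - nleaves c) in (c :: cs1, b)
      end in
    let: (cs', b) := go cs i in fixnode m (k + b) cs'.

Definition binsert (m : nat) (t : btree) (i : nat) : btree :=
  match ins m t i with
  | inl t' => t'
  | inr (l, r) => BNode 1 [:: l; r]
  end.

Definition T1 : btree := BNode 1 [::].

Definition is_history (m n : nat) (hist : seq btree) : Prop :=
  [/\ size hist = n, nth T1 hist 0 = T1,
      (forall k, k < n -> is_btree m (nth T1 hist k)) &
      (forall k, k.+1 < n -> exists2 i, i < nleaves (nth T1 hist k) &
                     nth T1 hist k.+1 = binsert m (nth T1 hist k) i)].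

(* [s] records, for each step k -> k+1 (0-based k), the index of the leaf of
   T_k (before splitting) into which the key is inserted. *)
Definition leaf_choice (m : nat) (hist : seq btree) (s : seq nat) : Prop :=
  size s = (size hist).-1 /\
  forall k, k < size s ->
    nth 0 s k < nleaves (nth T1 hist k) /\
    nth T1 hist k.+1 = binsert m (nth T1 hist k) (nth 0 s k).

(* (2m+1)-historic trees: labelled plane trees, each vertex having an  *)
(* ordered list of child slots (None = unoccupied = external vertex).  *)
Inductive htree : Type := HNode of nat & seq (option htree).

Definition hlabel (t : htree) := let: HNode l _ := t in l.

Definition branching (m h : nat) : bool := (2 * m <= h) && ((h - 2 * m) %% m.+1 == 0).
Definition nslots (m h : nat) : nat := if branching m h then 2 else 1.

Fixpoint hlabels (t : htree) : seq nat :=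
  let: HNode l ss := t in
  l :: flatten (map (fun o => if o is Some c then hlabels c else [::]) ss).

Fixpoint nexternal (t : htree) : nat :=
  let: HNode _ ss := t in
  sumn (map (fun o => if o is Some c then nexternal c else 1) ss).

Fixpoint hwf (m h : nat) (t : htree) : bool :=
  let: HNode l ss := t in
  (size ss == nslots m h) &&
  all (fun o => if o is Some c then (l < hlabel c) && hwf m h.+1 c else true) ss.

Definition is_historic (m n : nat) (t : htree) : Prop :=
  hwf m 0 t /\ perm_eq (hlabels t) (iota 1 n).

(* Place a new vertex labelled lab at the i-th (0-based, left to right)
   external vertex of t, t being at height h. *)
Fixpoint hins (m h : nat) (t : htree) (i lab : nat) {struct t} : htree :=
  let: HNode l ss := t in
  let fix go (ss : seq (option htree)) (i : nat) : seq (option htree) :=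
    match ss with
    | [::] => [::]
    | None :: ss0 =>
        if i == 0 then Some (HNode lab (nseq (nslots m h.+1) None)) :: ss0
        else None :: go ss0 i.-1
    | Some c :: ss0 =>
        if i < nexternal c then Some (hins m h.+1 c i lab) :: ss0
        else Some c :: go ss0 (i - nexternal c)
    end in
  HNode l (go ss i).

Definition H1 (m : nat) : htree := HNode 1 (nseq (nslots m 0) None).

Fixpoint hseq_from (m : nat) (H : htree) (k : nat) (s : seq nat) : seq htree :=
  match s with
  | [::] => [:: H]
  | i :: s' => H :: hseq_from m (hins m 0 H i k.+1) k.+1 s'
  end.

Definition hseq (m : nat) (s : seq nat) : seq htree := hseq_from m (H1 m) 1 s.

Definition PhiRel (m : nat) (hist : seq btree) (H : htree) : Prop :=
  exists2 s, leaf_choice m hist s & H = last (H1 m) (hseq m s).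

(* Main.v *)
Require Import Defs.
From mathcomp Require Import all_boot zify.
Set Implicit Arguments. Unset Strict Implicit. Unset Printing Implicit Defensive.


Definition lall (P : btree -> Prop) (cs : seq btree) : Prop :=
  foldr (fun c acc => P c /\ acc) True cs.
Definition btree_ind2 (P : btree -> Prop)
  (H : forall k cs, lall P cs -> P (BNode k cs)) : forall t, P t :=
  fix f t := match t with BNode k cs => H k cs
    ((fix g cs : lall P cs := match cs with [::] => I | c :: cs0 => conj (f c) (g cs0) end) cs) end.

Definition hall (P : htree -> Prop) (ss : seq (option htree)) : Prop :=
  foldr (fun o acc => (if o is Some c then P c else True) /\ acc) True ss.
Definition htree_ind2 (P : htree -> Prop)
  (H : forall l ss, hall P ss -> P (HNode l ss)) : forall t, P t :=
  fix f t := match t with HNode l ss => H l ss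
    ((fix g ss : hall P ss := match ss with [::] => I
       | None :: ss0 => conj I (g ss0) | Some c :: ss0 => conj (f c) (g ss0) end) ss) end.

Definition goB (f : btree -> nat -> btree + (btree * btree)) :=
  fix go (cs : seq btree) (i : nat) : seq btree * bool :=
      match cs with
      | [::] => ([::], false)
      | c :: cs0 =>
          if i < nleaves c then
            match f c i with
            | inl c' => (c' :: cs0, false)
            | inr (l, r) => (l :: r :: cs0, true)
            end
          else let: (cs1, b) := go cs0 (i - nleaves c) in (c :: cs1, b)
      end.

Lemma insE m k c cs i : ins m (BNode k (c :: cs)) i =
  let: (cs', b) := goB (ins m) (c :: cs) i in fixnode m (k + b) cs'.
Proof. by []. Qed.

Definition goH (m h lab : nat) (f : htree -> nat -> htree) :=
  fix go (ss : seq (option htree)) (i : nat) : seq (option htree) :=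
    match ss with
    | [::] => [::]
    | None :: ss0 =>
        if i == 0 then Some (HNode lab (nseq (nslots m h.+1) None)) :: ss0
        else None :: go ss0 i.-1
    | Some c :: ss0 =>
        if i < nexternal c then Some (f c i) :: ss0
        else Some c :: go ss0 (i - nexternal c)
    end.

Lemma hinsE m h l ss i lab : hins m h (HNode l ss) i lab =
  HNode l (goH m h lab (fun c i => hins m h.+1 c i lab) ss i).
Proof. by []. Qed.


Fixpoint leafkeys (t : btree) : seq nat :=
  let: BNode k cs := t in if cs is [::] then [:: k] else flatten (map leafkeys cs).

Lemma lk_node k cs : 0 < size cs -> leafkeys (BNode k cs) = flatten (map leafkeys cs).
Proof. by case: cs. Qed.

Lemma size_lk t : size (leafkeys t) = nleaves t.
Proof.
elim/btree_ind2: t => k cs IH.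
suff h: size (flatten (map leafkeys cs)) = sumn (map nleaves cs) by case: cs IH h.
elim: cs IH => //= c cs IH [h1 h2]; by rewrite size_cat h1 IH.
Qed.

Definition repl (a : seq nat) i (x : seq nat) := take i a ++ x ++ drop i.+1 a.

Lemma repl_catl a b i x : i < size a -> repl (a ++ b) i x = repl a i x ++ b.
Proof.
move=> hi; rewrite /repl take_cat hi drop_cat.
case: (ltnP i.+1 (size a)) => h; first by rewrite !catA.
have e: size a = i.+1 by apply/eqP; rewrite eqn_leq h hi.
by rewrite e subnn drop0 -e drop_size cats0 !catA.
Qed.

Lemma repl_catr a b i x : size a <= i -> repl (a ++ b) i x = a ++ repl b (i - size a) x.
Proof.
move=> hi; rewrite /repl take_cat ltnNge hi /= drop_cat ltnNge (leqW hi) /=.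
by rewrite subSn // -catA.
Qed.

Lemma nth_catl (a b : seq nat) i : i < size a -> nth 0 (a ++ b) i = nth 0 a i.
Proof. by move=> h; rewrite nth_cat h. Qed.
Lemma nth_catr (a b : seq nat) i : size a <= i -> nth 0 (a ++ b) i = nth 0 b (i - size a).
Proof. by move=> h; rewrite nth_cat ltnNge h. Qed.

Definition NEWB m a i := repl a i (if nth 0 a i == 2 * m then [:: m; m] else [:: (nth 0 a i).+1]).

Lemma NEWB_catl m a b i : i < size a -> NEWB m (a ++ b) i = NEWB m a i ++ b.
Proof. by move=> h; rewrite /NEWB nth_catl // repl_catl. Qed.
Lemma NEWB_catr m a b i : size a <= i -> NEWB m (a ++ b) i = a ++ NEWB m b (i - size a).
Proof. by move=> h; rewrite /NEWB nth_catr // repl_catr. Qed.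

Definition ires_ok m isroot d i a (r : btree + (btree * btree)) : Prop :=
  match r with
  | inl t' => bt_ok m t' isroot d /\ leafkeys t' = NEWB m a i
  | inr (l, r) => [/\ bt_ok m l false d, bt_ok m r false d & leafkeys l ++ leafkeys r = NEWB m a i]
  end.

Definition insP m t := forall isroot d i, bt_ok m t isroot d -> i < nleaves t ->
  ires_ok m isroot d i (leafkeys t) (ins m t i).

Lemma goB_spec m cs d i : lall (insP m) cs -> all (fun c => bt_ok m c false d) cs ->
  i < sumn (map nleaves cs) ->
  match goB (ins m) cs i with (cs', b) =>
   [/\ all (fun c => bt_ok m c false d) cs', size cs' = size cs + b &
       flatten (map leafkeys cs') = NEWB m (flatten (map leafkeys cs)) i] end.
Proof.
elim: cs i => [|c cs IH] i //= [Pc Pcs] /andP [okc okcs] hi.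
case: ifP => hic.
  have := Pc false d i okc hic.
  case: (ins m c i) => [c'|[l r]] /=.
    by case=> -> e; rewrite okcs e NEWB_catl ?size_lk // addn0.
  by case=> -> -> e; rewrite okcs catA e NEWB_catl ?size_lk // addn1.
have hi' : i - nleaves c < sumn (map nleaves cs).
  by rewrite ltn_subLR // leqNgt hic.
have := IH (i - nleaves c) Pcs okcs hi'.
case: (goB (ins m) cs (i - nleaves c)) => cs1 b [ok1 s1 e1] /=.
by rewrite okc ok1 s1 e1 NEWB_catr ?size_lk // leqNgt hic.
Qed.

Lemma bt_ok_node m k cs r d : 0 < size cs -> bt_ok m (BNode k cs) r d =
  [&& (if r then 1 <= k else m <= k), k <= 2 * m, 0 < d, size cs == k.+1 &
      all (fun c => bt_ok m c false d.-1) cs].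
Proof. by case: cs. Qed.

Lemma ins_spec m t : insP m t.
Proof.
elim/btree_ind2: t => k cs IH isroot d i.
case: cs IH => [|c cs] IH.
  move=> /= /and3P [hlo hhi /eqP d0] hi.
  have i0 : i = 0 by case: i hi.
  subst i; rewrite /fixnode; case: eqP => [e|ne] /=; rewrite /NEWB /repl /=.
    have ek : k = 2 * m by case: e.
    have h2 : m <= 2 * m by lia. by rewrite d0 ek eqxx leqnn h2 eqxx.
  have ek : (k == 2 * m) = false by apply/negbTE/eqP=> e2; apply: ne; rewrite e2.
  rewrite ek d0 /= andbT; split=> //; apply/andP; split.
    by case: isroot hlo => // h; apply: leqW.
  by rewrite ltn_neqAle hhi andbT; apply/eqP=> e2; apply: ne; rewrite e2.
rewrite insE bt_ok_node // => /and5P [hlo hhi d0 /eqP sz okcs] hi.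
have := goB_spec IH okcs hi.
case: (goB (ins m) (c :: cs) i) => cs' b [ok' s' e'].
have cs'0 : 0 < size cs' by rewrite s' sz.
rewrite /fixnode; case: eqP => e; rewrite /ires_ok.
  have s2 : size cs' = (2 * m).+2 by rewrite s' sz addSn -e.
  have st : size (take m.+1 cs') = m.+1 by rewrite size_takel // s2; lia.
  have sd : size (drop m.+1 cs') = m.+1 by rewrite size_drop s2; lia.
  move: ok'; rewrite -{1}(cat_take_drop m.+1 cs') all_cat => /andP [okt okd].
  rewrite !bt_ok_node ?st ?sd // leqnn leq_pmull // d0 okt okd eqxx.
  split=> //.
  rewrite !lk_node ?st ?sd // -flatten_cat -map_cat cat_take_drop e'.
  by [].
have hk : k + b <= 2 * m by case: b {s' e'} e => /= e; lia.
rewrite bt_ok_node // hk d0 ok' s' sz addSn eqxx lk_node // e'.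
split=> //; rewrite !andbT.
by case: isroot hlo => h; apply: leq_trans (leq_addr _ _).
Qed.

Lemma binsert_spec m t d i : 0 < m -> bt_ok m t true d -> i < nleaves t ->
  exists d', bt_ok m (binsert m t i) true d' /\ leafkeys (binsert m t i) = NEWB m (leafkeys t) i.
Proof.
move=> m0 ok hi; have := ins_spec ok hi; rewrite /binsert.
case: (ins m t i) => [t'|[l r]]; first by case=> ok' e; exists d.
case=> okl okr e; exists d.+1; split; last by rewrite /= cats0.
by rewrite bt_ok_node //= okl okr /= andbT; lia.
Qed.

Lemma nth_NEWB_at m a i : i < size a ->
  nth 0 (NEWB m a i) i = if nth 0 a i == 2 * m then m else (nth 0 a i).+1.
Proof.
move=> hi; rewrite /NEWB /repl nth_cat size_takel ?ltnn ?subnn ?(ltnW hi) //.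
by case: ifP.
Qed.

Lemma nth_NEWB_before m a i j : i < j -> j < size a -> nth 0 (NEWB m a j) i = nth 0 a i.
Proof.
move=> hij hj; rewrite /NEWB /repl nth_cat size_takel ?(ltnW hj) // hij nth_take //.
Qed.

Lemma NEWB_inj m a i j : 0 < m -> i < size a -> j < size a -> NEWB m a i = NEWB m a j -> i = j.
Proof.
move=> m0.
wlog hij : i j / i <= j.
  move=> W hi hj e; case: (leqP i j) => h; first exact: W.
  by apply/esym/W => //; apply: ltnW.
move=> hi hj e; case: (ltngtP i j) hij => // lt _.
have := nth_NEWB_at m hi; rewrite e nth_NEWB_before //.
case: eqP => [->|_]; lia.
Qed.

Fixpoint cf m e := if e is e'.+1 then (if branching m e' then m else (cf m e').+1) else 0.

Lemma modS_eq x d : 0 < d -> x.+1 %% d = if x %% d == d.-1 then 0 else (x %% d).+1.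
Proof.
move=> d0; rewrite {1}(divn_eq x d) -addnS modnMDl.
have := ltn_pmod x d0; case: eqP => [->|ne] h; first by rewrite prednK // modnn.
rewrite modn_small //; move: (x %% d) h ne => r h ne; lia.
Qed.

Lemma cfE m e : cf m e = if e <= 2 * m then e else m + (e - (2 * m).+1) %% m.+1.
Proof.
elim: e => [|e IH] //=; rewrite /branching.
case: (ltngtP e (2 * m)) => h.
- by rewrite IH ltnW // h leqNgt h.
- have -> : e - 2 * m = (e - (2 * m).+1).+1 by lia.
  rewrite IH leqNgt h /=.
  have -> : e.+1 - (2 * m).+1 = (e - (2 * m).+1).+1 by lia.
  rewrite !modS_eq //=; case: ((e - (2 * m).+1) %% m.+1 == m) => /=; lia.
- by subst e; rewrite !subnn mod0n addn0.
Qed.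

Lemma branching_cf m e : 0 < m -> branching m e = (cf m e == 2 * m).
Proof.
move=> m0; rewrite cfE /branching; case: (ltngtP e (2 * m)) => h.
- by rewrite /=; case: eqP => //; lia.
- rewrite /=.
  have -> : e - 2 * m = (e - (2 * m).+1).+1 by lia.
  rewrite modS_eq //=.
  have := ltn_pmod (e - (2 * m).+1) (ltn0Sn m).
  move: ((e - (2 * m).+1) %% m.+1) => r hr.
  case: (r =P m) => [->|ne] /=; case: eqP => //; lia.
- by subst e; rewrite subnn mod0n !eqxx.
Qed.

Lemma cf_nseq m e : 0 < m -> map (cf m) (nseq (nslots m e) e.+1) =
  if cf m e == 2 * m then [:: m; m] else [:: (cf m e).+1].
Proof. by move=> m0; rewrite /nslots /= branching_cf //; case: ifP => h /=; rewrite branching_cf // h. Qed.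


Fixpoint extheights (h : nat) (t : htree) : seq nat :=
  let: HNode _ ss := t in
  flatten (map (fun o => if o is Some c then extheights h.+1 c else [:: h.+1]) ss).

Definition NEWH m E i := repl E i (nseq (nslots m (nth 0 E i)) (nth 0 E i).+1).

Lemma NEWH_catl m a b i : i < size a -> NEWH m (a ++ b) i = NEWH m a i ++ b.
Proof. by move=> h; rewrite /NEWH nth_catl // repl_catl. Qed.
Lemma NEWH_catr m a b i : size a <= i -> NEWH m (a ++ b) i = a ++ NEWH m b (i - size a).
Proof. by move=> h; rewrite /NEWH nth_catr // repl_catr. Qed.

Lemma size_ext h t : size (extheights h t) = nexternal t.
Proof.
elim/htree_ind2: t h => l ss IH h /=.
elim: ss IH => //= o ss IHs [Ho Hs]; rewrite size_cat IHs //.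
by case: o Ho => // c ->.
Qed.

Definition extP m lab t := forall h i, i < nexternal t ->
  extheights h (hins m h t i lab) = NEWH m (extheights h t) i.

Definition exto h (o : option htree) := if o is Some c then extheights h.+1 c else [:: h.+1].
Definition neo (o : option htree) := if o is Some c then nexternal c else 1.

Lemma goH_ext m lab h ss i : hall (extP m lab) ss -> i < sumn (map neo ss) ->
  flatten (map (exto h) (goH m h lab (fun c i => hins m h.+1 c i lab) ss i)) =
  NEWH m (flatten (map (exto h) ss)) i.
Proof.
elim: ss i => [|o ss IHs] i //= [Ho Hs] hi.
case: o Ho hi => [c|] Ho hi.
  case: ifP => hic.
    rewrite map_cons /= Ho // NEWH_catl // size_ext //.
  rewrite map_cons /= IHs //.
    by rewrite NEWH_catr ?size_ext // leqNgt hic.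
  by move: hi hic => /= hi /negbT; rewrite -leqNgt => hic; lia.
case: eqP => [->|ne].
  rewrite /NEWH /repl /= drop0.
  by elim: (nslots m h.+1) => //= k ->.
rewrite map_cons /= IHs //.
  rewrite (@NEWH_catr m [:: h.+1]) /=; first by rewrite subn1. by case: i ne {hi}.
by case: i ne hi => //= i _; rewrite add1n ltnS.
Qed.

Lemma hins_ext m lab t : extP m lab t.
Proof.
elim/htree_ind2: t => l ss IH h i; rewrite hinsE => hi.
exact: (goH_ext h IH hi).
Qed.

Lemma map_cf_NEWH m E i : 0 < m -> i < size E ->
  map (cf m) (NEWH m E i) = NEWB m (map (cf m) E) i.
Proof.
move=> m0 hi; rewrite /NEWH /NEWB /repl !map_cat map_take map_drop cf_nseq //.
by rewrite (nth_map 0).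
Qed.

Lemma hlabel_hins m h t i lab : hlabel (hins m h t i lab) = hlabel t.
Proof. by case: t. Qed.

Definition labo (o : option htree) := if o is Some c then hlabels c else [::].

Lemma flatten_nseqNone k : flatten (map labo (nseq k None)) = [::].
Proof. by elim: k. Qed.

Lemma goH_labels m lab h ss i :
  hall (fun c => forall h i, i < nexternal c -> perm_eq (hlabels (hins m h c i lab)) (lab :: hlabels c)) ss ->
  i < sumn (map neo ss) ->
  perm_eq (flatten (map labo (goH m h lab (fun c i => hins m h.+1 c i lab) ss i)))
          (lab :: flatten (map labo ss)).
Proof.
elim: ss i => [|o ss IHs] i //= [Ho Hs] hi.
case: o Ho hi => [c|] Ho hi.
  case: ifP => hic.
    rewrite map_cons /=.
    by rewrite -cat_cons perm_cat2r Ho.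
  rewrite map_cons /=.
  have hi' : i - nexternal c < sumn (map neo ss).
    by move: hi hic => /= hi /negbT; rewrite -leqNgt => hic; lia.
  rewrite (perm_catl _ (IHs _ Hs hi')).
  by rewrite -cat1s perm_catCA.
rewrite /=; case: eqP => [_|ne].
  by rewrite /= flatten_nseqNone.
rewrite map_cons /= IHs //.
by case: i ne hi => //= i _; rewrite add1n ltnS.
Qed.

Lemma hins_labels m lab t h i : i < nexternal t ->
  perm_eq (hlabels (hins m h t i lab)) (lab :: hlabels t).
Proof.
elim/htree_ind2: t h i => l ss IH h i; rewrite hinsE => hi.
have := goH_labels h IH hi.
move=> P.
apply: (perm_trans (y := l :: lab :: flatten (map labo ss))); first by rewrite perm_cons.
by rewrite -(cat1s l) -(cat1s lab) perm_catCA.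
Qed.

Definition okc m h l (o : option htree) := if o is Some c then (l < hlabel c) && hwf m h.+1 c else true.

Lemma size_goH m h lab f ss i : size (goH m h lab f ss i) = size ss.
Proof.
elim: ss i => [|[c|] ss IH] i //=; first by case: ifP => _ //=; rewrite IH.
by case: eqP => _ //=; rewrite IH.
Qed.

Lemma goH_hwf m lab h l ss i :
  hall (fun c => forall h i, hwf m h c -> all (fun x => x < lab) (hlabels c) ->
         hwf m h (hins m h c i lab)) ss ->
  l < lab -> all (okc m h l) ss -> all (fun x => x < lab) (flatten (map labo ss)) ->
  all (okc m h l) (goH m h lab (fun c i => hins m h.+1 c i lab) ss i).
Proof.
elim: ss i => [|o ss IHs] i //= [Ho Hs] hl /andP [ok1 okr].
rewrite all_cat => /andP [lab1 labr].
case: o Ho ok1 lab1 => [c|] Ho ok1 lab1 /=.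
  case: ifP => hic /=.
    rewrite okr andbT /okc hlabel_hins.
    by case/andP: ok1 => -> /= w; apply: Ho.
  by rewrite -/(okc m h l (Some c)) ok1 /=; apply: IHs.
case: eqP => _ /=; last by apply: IHs.
rewrite okr andbT /= hl /= size_nseq eqxx /=.
by elim: (nslots m h.+1).
Qed.

Lemma hins_hwf m lab t h i : hwf m h t -> all (fun x => x < lab) (hlabels t) ->
  hwf m h (hins m h t i lab).
Proof.
elim/htree_ind2: t h i => l ss IH h i; rewrite hinsE => /andP [sz ok] /= /andP [hl labs].
apply/andP; split; first by rewrite size_goH.
exact: goH_hwf.
Qed.

Fixpoint prune (K : nat) (t : htree) : htree :=
  let: HNode l ss := t in
  HNode l (map (fun o => if o is Some c then (if hlabel c <= K then Some (prune K c) else None) else None) ss).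

Definition pro K (o : option htree) := if o is Some c then (if hlabel c <= K then Some (prune K c) else None) else None.

Lemma pruneE K l ss : prune K (HNode l ss) = HNode l (map (pro K) ss).
Proof. by []. Qed.

Lemma hlabel_in t : hlabel t \in hlabels t.
Proof. by case: t => l ss /=; rewrite inE eqxx. Qed.

Lemma prune_id K t : all (fun x => x <= K) (hlabels t) -> prune K t = t.
Proof.
elim/htree_ind2: t => l ss IH; rewrite pruneE /= => /andP [_ H]; congr HNode.
elim: ss IH H => //= o ss IHs [Ho Hs]; rewrite all_cat => /andP [H1 H2].
rewrite IHs //; case: o Ho H1 => //= c Ho H1.
rewrite Ho //; move/allP: H1 => /(_ _ (hlabel_in c)) -> //.
Qed.

Lemma prune_hins m K lab t h i : K < lab -> prune K (hins m h t i lab) = prune K t.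
Proof.
move=> hK; elim/htree_ind2: t h i => l ss IH h i; rewrite hinsE !pruneE; congr HNode.
elim: ss i IH => //= o ss IHs i [Ho Hs].
case: o Ho => [c|] Ho /=.
  case: ifP => _ /=; last by rewrite IHs.
  by rewrite hlabel_hins Ho.
case: eqP => _ /=; last by rewrite IHs.
by rewrite leqNgt hK.
Qed.

Lemma leqS_ne x L : x != L.+1 -> (x <= L.+1) = (x <= L).
Proof. by move=> ne; rewrite leq_eqVlt ltnS (negbTE ne). Qed.

Lemma prune_notin L t : L.+1 \notin hlabels t -> prune L.+1 t = prune L t.
Proof.
elim/htree_ind2: t => l ss IH; rewrite !pruneE /= inE negb_or => /andP [_ nin].
congr HNode.
elim: ss IH nin => //= o ss IHs [Ho Hs]; rewrite mem_cat negb_or => /andP [n1 n2].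
rewrite IHs //; case: o Ho n1 => //= c Ho n1.
have nc : hlabel c != L.+1 by apply: contra n1 => /eqP <-; exact: hlabel_in.
by rewrite leqS_ne // Ho.
Qed.

Lemma pro_notin L o : L.+1 \notin labo o -> pro L.+1 o = pro L o.
Proof.
case: o => //= c n1.
have nc : hlabel c != L.+1 by apply: contra n1 => /eqP <-; exact: hlabel_in.
by rewrite leqS_ne // prune_notin.
Qed.

Lemma map_pro_notin L ss : L.+1 \notin flatten (map labo ss) -> map (pro L.+1) ss = map (pro L) ss.
Proof.
elim: ss => //= o ss IH; rewrite mem_cat negb_or => /andP [n1 n2].
by rewrite pro_notin // IH.
Qed.

Lemma hwf_min m h t : hwf m h t -> all (fun x => hlabel t <= x) (hlabels t).
Proof.
elim/htree_ind2: t h => l ss IH h /= /andP [_ ok]; rewrite leqnn /=.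
elim: ss IH ok => //= o ss IHs [Ho Hs] /andP [o1 o2]; rewrite all_cat IHs // andbT.
case: o Ho o1 => //= c Ho /andP [lc wc].
apply/allP=> x /(allP (Ho _ wc)); exact: leq_trans (ltnW lc).
Qed.

Lemma prune_root m h t : hwf m h t -> prune (hlabel t) t = HNode (hlabel t) (nseq (nslots m h) None).
Proof.
case: t => l ss /= /andP [/eqP <- ok]; congr HNode.
elim: ss ok => //= o ss IH /andP [o1 o2]; rewrite IH //.
by case: o o1 => //= c /andP [lc _]; rewrite leqNgt lc.
Qed.

Definition Pins m L c := forall h, hwf m h c -> uniq (hlabels c) -> L.+1 \in hlabels c ->
  hlabel c <= L -> exists2 i, i < nexternal (prune L c) & prune L.+1 c = hins m h (prune L c) i L.+1.

Lemma goH_prune m L h l ss : hall (Pins m L) ss -> all (okc m h l) ss ->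
  uniq (flatten (map labo ss)) -> L.+1 \in flatten (map labo ss) ->
  exists2 i, i < sumn (map neo (map (pro L) ss)) &
    map (pro L.+1) ss = goH m h L.+1 (fun c i => hins m h.+1 c i L.+1) (map (pro L) ss) i.
Proof.
elim: ss => //= o ss IHs [Ho Hs] /andP [o1 o2]; rewrite cat_uniq mem_cat.
move=> /and3P [u1 dis u2] /orP [inc|inr].
  have nin : L.+1 \notin flatten (map labo ss).
    by apply: contra dis => hh; apply/hasP; exists L.+1.
  rewrite map_pro_notin //.
  case: o Ho o1 u1 dis inc => //= c Ho /andP [_ wc] u1 dis inc.
  case: (eqVneq (hlabel c) L.+1) => e.
    exists 0; first by rewrite e ltnn.
    by rewrite e leqnn ltnn /= -e (prune_root wc).
  have hcl : hlabel c <= L.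
    by rewrite -leqS_ne //; apply: (allP (hwf_min wc)).
  have [i hi E] := Ho h.+1 wc u1 inc hcl.
  exists i; first by rewrite hcl /=; apply: leq_trans (leq_addr _ _).
  by rewrite hcl (leq_trans hcl) //= hi E.
have nin : L.+1 \notin labo o.
  apply: contra dis => hh; apply/hasP; exists L.+1 => //.
rewrite pro_notin //.
have [i hi E] := IHs Hs o2 u2 inr.
exists (neo (pro L o) + i); first by rewrite ltn_add2l.
rewrite E; case: (pro L o) => [c'|] /=.
  by rewrite ltnNge leq_addr /= addKn.
by [].
Qed.

Lemma prune_ins m L t : Pins m L t.
Proof.
elim/htree_ind2: t => l ss IH h hw hu hin hl.
move: hw => /andP [_ ok]; move: hu => /andP [_ u].
move: hin; rewrite in_cons => /orP [/eqP e|inl].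
  by move: hl; rewrite -e ltnn.
have [i hi E] := goH_prune IH ok u inl.
by exists i; rewrite // !pruneE hinsE E.
Qed.


Definition corr m T H := leafkeys T = map (cf m) (extheights 0 H).

Lemma nleaves_corr m T H : corr m T H -> nleaves T = nexternal H.
Proof. by rewrite /corr -size_lk -(size_ext 0) => ->; rewrite size_map. Qed.

Lemma corr_T1 m : 0 < m -> corr m T1 (H1 m).
Proof.
move=> m0; rewrite /corr /H1 /nslots /branching.
have -> : (2 * m <= 0) = false by apply/negbTE; rewrite -ltnNge muln_gt0.
by rewrite /= /branching; have -> : (2 * m <= 0) = false by apply/negbTE; rewrite -ltnNge muln_gt0.
Qed.

Lemma corr_step m T H d i lab : 0 < m -> bt_ok m T true d -> i < nleaves T -> corr m T H ->
  exists d', bt_ok m (binsert m T i) true d' /\ corr m (binsert m T i) (hins m 0 H i lab).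
Proof.
move=> m0 ok hi c.
have [d' [ok' e]] := binsert_spec m0 ok hi.
exists d'; split=> //.
have hiE : i < nexternal H by rewrite -(nleaves_corr c).
rewrite /corr e hins_ext // c map_cf_NEWH // size_ext //.
Qed.

Lemma size_hseq_from m H k s : size (hseq_from m H k s) = (size s).+1.
Proof. by elim: s H k => //= i s IH H k; rewrite IH. Qed.

Lemma nth_hseq_fromS m H k s j x : j < size s ->
  nth x (hseq_from m H k s) j.+1 = hins m 0 (nth x (hseq_from m H k s) j) (nth 0 s j) (k + j).+1.
Proof.
elim: s H k j => //= i s IH H k [|j] hj /=; first by rewrite addn0; case: s {IH hj}.
by rewrite IH // addSnnS.
Qed.

Fixpoint bseq_from m (T : btree) (s : seq nat) : seq btree :=
  match s with
  | [::] => [:: T]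
  | i :: s' => T :: bseq_from m (binsert m T i) s'
  end.

Lemma size_bseq_from m T s : size (bseq_from m T s) = (size s).+1.
Proof. by elim: s T => //= i s IH T; rewrite IH. Qed.

Lemma nth_bseq_fromS m T s j x : j < size s ->
  nth x (bseq_from m T s) j.+1 = binsert m (nth x (bseq_from m T s) j) (nth 0 s j).
Proof.
elim: s T j => //= i s IH T [|j] hj /=; first by case: s {IH hj}.
by rewrite IH.
Qed.

Lemma last_hseq m s : last (H1 m) (hseq m s) = nth (H1 m) (hseq m s) (size s).
Proof. by rewrite -nth_last /hseq size_hseq_from. Qed.

Lemma corr_all m n hist s : 0 < m -> is_history m n hist -> leaf_choice m hist s ->
  forall k, k < n -> corr m (nth T1 hist k) (nth (H1 m) (hseq m s) k).
Proof.
move=> m0 [sz h0 bt _] [ss lc]; elim=> [|k IH] hk.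
  have -> : nth (H1 m) (hseq m s) 0 = H1 m by case: (s).
  by rewrite h0; exact: corr_T1.
have hks : k < size s by rewrite ss sz; lia.
have [hl he] := lc k hks.
have [d okd] := bt k (ltnW hk).
rewrite he /hseq nth_hseq_fromS //.
have [d' [_ c]] := corr_step (k + 1).+1 m0 okd hl (IH (ltnW hk)).
by rewrite addnC; exact: c.
Qed.

Lemma labels_all m n hist s : 0 < m -> is_history m n hist -> leaf_choice m hist s ->
  forall k, k < n -> hwf m 0 (nth (H1 m) (hseq m s) k) /\
    perm_eq (hlabels (nth (H1 m) (hseq m s) k)) (iota 1 k.+1).
Proof.
move=> m0 hh lc; have := corr_all m0 hh lc.
case: hh => [sz h0 bt _]; case: lc => [ss lc] C.
elim=> [|k IH] hk.
  have -> : nth (H1 m) (hseq m s) 0 = H1 m by case: (s).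
  rewrite /= /H1 size_nseq eqxx /=; split; elim: (nslots m 0) => //.
have hks : k < size s by rewrite ss sz; lia.
have [hl he] := lc k hks.
have [w p] := IH (ltnW hk).
have hiE : nth 0 s k < nexternal (nth (H1 m) (hseq m s) k).
  by rewrite -(nleaves_corr (C k (ltnW hk))).
rewrite /hseq nth_hseq_fromS // -/(hseq m s) add1n.
split.
  apply: hins_hwf => //; apply/allP => x.
  by rewrite (perm_mem p) mem_iota; lia.
have P2 := @hins_labels m k.+2 _ 0 _ hiE.
apply: (perm_trans P2).
rewrite -addn1 iotaD cats1 perm_sym perm_rcons add1n addn1 perm_cons perm_sym; exact: p.
Qed.

Lemma build_seq (P : nat -> nat -> Prop) N :
  (forall k, k < N -> exists i, P k i) ->
  exists s : seq nat, size s = N /\ forall k, k < N -> P k (nth 0 s k).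
Proof.
move=> H; suff: forall K, K <= N -> exists s : seq nat, size s = K /\ forall k, k < K -> P k (nth 0 s k).
  by move/(_ N (leqnn N)).
elim=> [|K IH] hK; first by exists [::].
have [s [ss Ps]] := IH (ltnW hK).
have [i Pi] := H K hK.
exists (rcons s i); split; first by rewrite size_rcons ss.
move=> k hk; rewrite nth_rcons ss.
case: (ltngtP k K) => h; first exact: Ps.
  by move: hk; rewrite ltnS leqNgt h.
by rewrite h.
Qed.

Lemma exists_choice m n hist : 1 <= n -> is_history m n hist -> exists s, leaf_choice m hist s.
Proof.
move=> hn [sz h0 bt st].
have H : forall k, k < n.-1 -> exists i, i < nleaves (nth T1 hist k) /\
   nth T1 hist k.+1 = binsert m (nth T1 hist k) i.
  by move=> k hk; have [i hi e] := st k (ltac:(lia)); exists i.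
have [s [ss Ps]] := build_seq H.
by exists s; split; rewrite ?ss ?sz // => k hk; apply: Ps; rewrite -ss sz.
Qed.

Lemma leaf_choice_unique m n hist s1 s2 : 0 < m -> is_history m n hist ->
  leaf_choice m hist s1 -> leaf_choice m hist s2 -> s1 = s2.
Proof.
move=> m0 [sz h0 bt _] [ss1 l1] [ss2 l2].
apply: (@eq_from_nth _ 0); first by rewrite ss1 ss2.
move=> k hk; have hk2 : k < size s2 by rewrite ss2 -ss1.
have [a1 e1] := l1 k hk; have [a2 e2] := l2 k hk2.
have [d okd] := bt k (ltac:(move: hk; rewrite ss1 sz; lia)).
have [_ [_ E1]] := binsert_spec m0 okd a1.
have [_ [_ E2]] := binsert_spec m0 okd a2.
apply: (@NEWB_inj m (leafkeys (nth T1 hist k))) => //; rewrite ?size_lk //.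
by rewrite -E1 -E2 -e1 -e2.
Qed.

Lemma hist_bseq m n hist s : 1 <= n -> is_history m n hist -> leaf_choice m hist s ->
  hist = bseq_from m T1 s.
Proof.
move=> hn [sz h0 _ _] [ss lc].
apply: (@eq_from_nth _ T1); first by rewrite size_bseq_from ss sz; lia.
elim=> [|k IH] hk; first by rewrite h0; case: (s).
have hks : k < size s by rewrite ss; lia.
by rewrite nth_bseq_fromS // -IH ?(ltnW hk) //; case: (lc k hks).
Qed.

Lemma prune_hseq m n hist s : 0 < m -> is_history m n hist -> leaf_choice m hist s ->
  forall d k, k + d < n -> prune k.+1 (nth (H1 m) (hseq m s) (k + d)) = nth (H1 m) (hseq m s) k.
Proof.
move=> m0 hh lc; have LA := labels_all m0 hh lc.
case: hh => [sz _ _ _]; case: lc => [ss _].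
elim=> [|d IH] k hk.
  rewrite addn0; apply: prune_id; apply/allP => x.
  have [_ p] := LA k (ltac:(lia)).
  by rewrite (perm_mem p) mem_iota; lia.
rewrite addnS /hseq nth_hseq_fromS; last by rewrite ss sz; lia.
by rewrite prune_hins -/(hseq m s) ?IH //; lia.
Qed.

Lemma hseq_inj m n hist1 hist2 s1 s2 : 0 < m -> 1 <= n ->
  is_history m n hist1 -> is_history m n hist2 ->
  leaf_choice m hist1 s1 -> leaf_choice m hist2 s2 ->
  last (H1 m) (hseq m s1) = last (H1 m) (hseq m s2) -> s1 = s2.
Proof.
move=> m0 hn h1 h2 c1 c2.
have P1 := prune_hseq m0 h1 c1; have P2 := prune_hseq m0 h2 c2.
have C1 := corr_all m0 h1 c1.
case: (h1) => [sz1 _ _ _]; case: (h2) => [sz2 _ _ _].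
case: (c1) => [ss1 l1]; case: (c2) => [ss2 l2].
rewrite !last_hseq ss1 ss2 sz1 sz2 => E.
have HS : forall k, k < n -> nth (H1 m) (hseq m s1) k = nth (H1 m) (hseq m s2) k.
  move=> k hk; have e : k + (n.-1 - k) = n.-1 by lia.
  rewrite -(P1 (n.-1 - k) k); last lia.
  rewrite -(P2 (n.-1 - k) k); last lia.
  by rewrite e E.
apply: (@eq_from_nth _ 0); first by rewrite ss1 ss2 sz1 sz2.
move=> k hk; have hk2 : k < size s2 by rewrite ss2 sz2 -sz1 -ss1.
have hkn : k < n by rewrite -sz1; lia.
set Hk := nth (H1 m) (hseq m s1) k.
have [a1 _] := l1 k hk; have [a2 _] := l2 k hk2.
have b1 : nth 0 s1 k < nexternal Hk by rewrite -(nleaves_corr (C1 k hkn)).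
have b2 : nth 0 s2 k < nexternal Hk.
  by rewrite /Hk HS // -(nleaves_corr (corr_all m0 h2 c2 hkn)).
have E2 := HS k.+1 (ltac:(lia)).
rewrite /hseq !nth_hseq_fromS // -!/(hseq _ _) -/Hk -(HS k hkn) -/Hk in E2.
have := congr1 (fun t => map (cf m) (extheights 0 t)) E2.
rewrite /= !hins_ext // !map_cf_NEWH ?size_ext //.
by move/NEWB_inj; apply; rewrite // size_map size_ext.
Qed.

Lemma surj m n H : 0 < m -> 1 <= n -> is_historic m n H ->
  exists2 hist, is_history m n hist & PhiRel m hist H.
Proof.
move=> m0 hn [w p].
have u : uniq (hlabels H) by rewrite (perm_uniq p) iota_uniq.
have mem x : (x \in hlabels H) = (1 <= x < 1 + n) by rewrite (perm_mem p) mem_iota.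
have r1 : hlabel H = 1.
  have := allP (hwf_min w) 1; rewrite mem => /(_ (ltac:(apply/andP; split; lia))).
  have := hlabel_in H; rewrite mem; lia.
pose HK k := prune k.+1 H.
have HK0 : HK 0 = H1 m by rewrite /HK -{1}r1 (prune_root w) r1.
have step : forall k, k < n.-1 -> exists i, i < nexternal (HK k) /\ HK k.+1 = hins m 0 (HK k) i k.+2.
  move=> k hk.
  have [i hi e] := prune_ins (m := m) (L := k.+1) w u (ltac:(rewrite mem; lia)) (ltac:(rewrite r1; lia)).
  by exists i.
have [s [ss Ps]] := build_seq step.
have HS : forall k, k < n -> nth (H1 m) (hseq m s) k = HK k.
  elim=> [|k IH] hk; first by rewrite -HK0; case: (s).
  have hks : k < size s by rewrite ss; lia.
  rewrite /hseq nth_hseq_fromS // -/(hseq m s) IH ?(ltnW hk) //.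
  by have [_ ->] := Ps k (ltac:(lia)); rewrite add1n.
pose hist := bseq_from m T1 s.
have INV : forall k, k < n -> corr m (nth T1 hist k) (nth (H1 m) (hseq m s) k) /\
    exists d, bt_ok m (nth T1 hist k) true d.
  elim=> [|k IH] hk.
    have -> : nth (H1 m) (hseq m s) 0 = H1 m by case: (s).
    have -> : nth T1 hist 0 = T1 by rewrite /hist; case: (s).
    split; first exact: corr_T1.
    by exists 0; rewrite /= andbT; lia.
  have hks : k < size s by rewrite ss; lia.
  have [C [d okd]] := IH (ltnW hk).
  have [b1 e1] := Ps k (ltac:(lia)).
  have b2 : nth 0 s k < nleaves (nth T1 hist k) by rewrite (nleaves_corr C) HS // ltnW.
  have [d' [ok' C']] := corr_step k.+2 m0 okd b2 C.
  rewrite /hist nth_bseq_fromS // /hseq nth_hseq_fromS // add1n.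
  by split=> //; exists d'.
have szh : size hist = n by rewrite /hist size_bseq_from ss; lia.
exists hist.
  split=> //; first by rewrite /hist; case: (s).
    by move=> k hk; have [_ [d okd]] := INV k hk; exists d.
  move=> k hk; exists (nth 0 s k).
    have [C _] := INV k (ltac:(lia)).
    by rewrite (nleaves_corr C) HS; [case: (Ps k (ltac:(lia)))|lia].
  by rewrite /hist nth_bseq_fromS // ss; lia.
exists s.
  split; first by rewrite szh ss.
  move=> k hk; split; last by rewrite /hist nth_bseq_fromS.
  have [C _] := INV k (ltac:(lia)).
  by rewrite (nleaves_corr C) HS; [case: (Ps k (ltac:(lia)))|lia].
rewrite last_hseq HS ?ss; last by lia.
rewrite /HK prednK //; apply/esym/prune_id; apply/allP => x.
by rewrite mem; lia.
Qed.

Unset Implicit Arguments.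

Theorem theorem1 (n m : nat) (hn : 1 <= n) (hm : 1 <= m) :
  (* well defined: every history has exactly one image *)
  (forall hist, is_history m n hist -> exists! H, PhiRel m hist H) /\
  (* in particular: #external vertices of H_k = #leaves of T_k for all k *)
  (forall hist s, is_history m n hist -> leaf_choice m hist s ->
     forall k, k < n -> nexternal (nth (H1 m) (hseq m s) k) = nleaves (nth T1 hist k)) /\
  (* the image is a (2m+1)-historic tree on n vertices *)
  (forall hist H, is_history m n hist -> PhiRel m hist H -> is_historic m n H) /\
  (* injective *)
  (forall hist1 hist2 H, is_history m n hist1 -> is_history m n hist2 ->
     PhiRel m hist1 H -> PhiRel m hist2 H -> hist1 = hist2) /\
  (* surjective onto historic trees on n vertices *)
  (forall H, is_historic m n H -> exists2 hist, is_history m n hist & PhiRel m hist H).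
Proof.
have m0 : 0 < m := hm.
split.
  move=> hist hh; have [s c] := exists_choice hn hh.
  exists (last (H1 m) (hseq m s)); split; first by exists s.
  by move=> H' [s' c' ->]; rewrite (leaf_choice_unique m0 hh c c').
split.
  by move=> hist s hh c k hk; rewrite (nleaves_corr (corr_all m0 hh c hk)).
split.
  move=> hist H hh [s c ->].
  have [sz _ _ _] := hh; have [ss _] := c.
  have [w p] := labels_all m0 hh c (ltac:(rewrite -sz; lia) : n.-1 < n).
  by rewrite last_hseq ss sz; split=> //; rewrite prednK in p.
split.
  move=> h1 h2 H hh1 hh2 [s1 c1 e1] [s2 c2 e2].
  have es := hseq_inj m0 hn hh1 hh2 c1 c2 (etrans (esym e1) e2).
  by rewrite (hist_bseq hn hh1 c1) (hist_bseq hn hh2 c2) es.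
by move=> H hH; exact: surj.
Qed.
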